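(* Let $\theta\in(0,\pi/2)$ and let $\mathcal B$ be a family of Besicovitch balls in $(\mathbb H,d_\alpha)$. Then there is a finite family of points $\{p_j\}$ such that $\mathcal F=\{B(p_j,r_{p_j})\}$ is a family of Besicovitch balls, every $p_j$ satisfies $z_{p_j}\le0$ and $p_j\in\mathcal C(\theta)$, and $\operatorname{Card}\mathcal B\le 2\big(\tfrac{\pi}{\theta}+1\big)\operatorname{Card}\mathcal F+2$.
   Context: $\mathbb H=\mathbb R^3$, $p=(x_p,y_p,z_p)$, group law $(x,y,z)\cdot(x',y',z')=(x+x',y+y',z+z'+\tfrac12(xy'-yx'))$, dilations $\delta_\lambda(x,y,z)=(\lambda x,\lambda y,\lambda^2z)$. Fix $\alpha>0$ such that $d_\alpha(p,q)=\inf\{r>0:\delta_{1/r}(p^{-1}\cdot q)\in B_\alpha\}$ is a distance, $B_\alpha$ the closed Euclidean ball of radius $\alpha$ at $0$. $B(p,r)=\{q:d_\alpha(q,p)\le r\}$ and $r_p=d_\alpha(0,p)$. $\mathcal C(\theta)=\{p: |y_p|<x_p\tan\theta\}$. A family of Besicovitch balls is a finite family of balls $\{B(x_B,r_B)\}$ with $x_B\notin B'$ for distinct members $B,B'$ and with nonempty common intersection. *)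

(* Defs.v *)
From Stdlib Require Import Reals List ClassicalEpsilon.
Import ListNotations.
Open Scope R_scope.

Definition H : Type := (R * R * R)%type.
Definition hx (p : H) : R := fst (fst p).
Definition hy (p : H) : R := snd (fst p).
Definition hz (p : H) : R := snd p.
Definition hpt (x y z : R) : H := (x, y, z).

Definition hmul (p q : H) : H :=
  hpt (hx p + hx q) (hy p + hy q)
      (hz p + hz q + / 2 * (hx p * hy q - hy p * hx q)).
Definition hinv (p : H) : H := hpt (- hx p) (- hy p) (- hz p).
Definition horigin : H := hpt 0 0 0.

Definition dil (l : R) (p : H) : H := hpt (l * hx p) (l * hy p) (l * l * hz p).

Definition in_Balpha (alpha : R) (p : H) : Prop :=
  hx p ^ 2 + hy p ^ 2 + hz p ^ 2 <= alpha ^ 2.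

Definition is_inf (S : R -> Prop) (m : R) : Prop :=
  (forall r, S r -> m <= r) /\ (forall m', (forall r, S r -> m' <= r) -> m' <= m).

Definition dset (alpha : R) (p q : H) (r : R) : Prop :=
  r > 0 /\ in_Balpha alpha (dil (/ r) (hmul (hinv p) q)).

Definition d_alpha (alpha : R) (p q : H) : R :=
  epsilon (inhabits 0) (fun m => is_inf (dset alpha p q) m).

Definition is_distance (d : H -> H -> R) : Prop :=
  (forall p q, 0 <= d p q) /\
  (forall p q, d p q = 0 <-> p = q) /\
  (forall p q, d p q = d q p) /\
  (forall p q s, d p s <= d p q + d q s).

Definition in_ball (alpha : R) (p : H) (r : R) (q : H) : Prop :=
  d_alpha alpha q p <= r.

Definition rp (alpha : R) (p : H) : R := d_alpha alpha horigin p.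

Definition in_cone (theta : R) (p : H) : Prop :=
  Rabs (hy p) < hx p * tan theta.

(* A finite family of balls is given as a list of (center, radius) pairs,
   its cardinality being the length of the list.  It is a family of
   Besicovitch balls if the center of each member does not lie in any other
   member (which forces the members to be pairwise distinct balls), and
   the members have a common point. *)
Definition besicovitch (alpha : R) (fam : list (H * R)) : Prop :=
  (forall i j, (i < length fam)%nat -> (j < length fam)%nat -> i <> j ->
     ~ in_ball alpha (fst (nth j fam (horigin, 0)))
                     (snd (nth j fam (horigin, 0)))
                     (fst (nth i fam (horigin, 0)))) /\
  (exists q, forall b, In b fam -> in_ball alpha (fst b) (snd b) q).

(* Main.v *)
Require Import Defs.
From Stdlib Require Import Reals List Lra Lia Psatz ClassicalEpsilon FunctionalExtensionality PropExtensionality Nsatz.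
Import ListNotations.
Open Scope R_scope.

Lemma pt_eq (p q : H) : hx p = hx q -> hy p = hy q -> hz p = hz q -> p = q.
Proof. destruct p as [[a b] c], q as [[a' b'] c']; unfold hx, hy, hz; simpl; intros; subst; reflexivity. Qed.

Lemma hx_pt a b c : hx (hpt a b c) = a. Proof. reflexivity. Qed.
Lemma hy_pt a b c : hy (hpt a b c) = b. Proof. reflexivity. Qed.
Lemma hz_pt a b c : hz (hpt a b c) = c. Proof. reflexivity. Qed.

Definition rot (c s : R) (p:H) : H := hpt (c*hx p - s*hy p) (s*hx p + c*hy p) (hz p).
Definition refl (p:H) : H := hpt (hx p) (- hy p) (- hz p).

Lemma d_inv alpha (F G : H -> H) :
  (forall p q, hmul (hinv (F p)) (F q) = G (hmul (hinv p) q)) ->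
  (forall l v, dil l (G v) = G (dil l v)) ->
  (forall v, in_Balpha alpha (G v) <-> in_Balpha alpha v) ->
  forall p q, d_alpha alpha (F p) (F q) = d_alpha alpha p q.
Proof.
  intros HF HD HB p q. unfold d_alpha.
  assert (E : dset alpha (F p) (F q) = dset alpha p q).
  { extensionality r. apply propositional_extensionality. unfold dset.
    rewrite HF, HD, HB. tauto. }
  rewrite E. reflexivity.
Qed.

Lemma d_transl alpha g p q : d_alpha alpha (hmul g p) (hmul g q) = d_alpha alpha p q.
Proof.
  apply (d_inv alpha (hmul g) (fun v => v)); try tauto; intros.
  apply pt_eq; unfold hmul, hinv, hpt, hx, hy, hz; simpl; field.
Qed.

Lemma d_rot alpha t p q :
  d_alpha alpha (rot (cos t) (sin t) p) (rot (cos t) (sin t) q) = d_alpha alpha p q.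
Proof.
  assert (Hcs : cos t * cos t + sin t * sin t = 1).
  { pose proof (sin2_cos2 t). unfold Rsqr in *. lra. }
  set (c := cos t) in *. set (s := sin t) in *. clearbody c s.
  apply (d_inv alpha (rot c s) (rot c s)); intros.
  - apply pt_eq; unfold rot, hmul, hinv, hpt, hx, hy, hz; simpl; try ring.
    nsatz.
  - apply pt_eq; unfold rot, dil, hpt, hx, hy, hz; simpl; ring.
  - unfold in_Balpha, rot, hpt, hx, hy, hz; cbn [fst snd].
    assert (E : (c * fst (fst v) - s * snd (fst v)) ^ 2 + (s * fst (fst v) + c * snd (fst v)) ^ 2
      = fst (fst v) ^2 + snd (fst v) ^ 2).
    { transitivity ((c*c+s*s) * (fst (fst v) ^2 + snd (fst v) ^ 2)); [ring|rewrite Hcs; ring]. }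
    rewrite E. tauto.
Qed.

Lemma d_refl alpha p q : d_alpha alpha (refl p) (refl q) = d_alpha alpha p q.
Proof.
  apply (d_inv alpha refl refl); intros.
  - apply pt_eq; unfold refl, hmul, hinv, hpt, hx, hy, hz; simpl; field.
  - apply pt_eq; unfold refl, dil, hpt, hx, hy, hz; simpl; ring.
  - unfold in_Balpha, refl, hpt, hx, hy, hz; cbn [fst snd].
    replace ((- snd (fst v)) ^ 2) with (snd (fst v) ^2) by ring.
    replace ((- snd v) ^ 2) with (snd v ^2) by ring. tauto.
Qed.

Lemma dset_ne alpha (Ha : 0 < alpha) p q : exists r, dset alpha p q r.
Proof.
  set (v := hmul (hinv p) q).
  set (a := hx v). set (b := hy v). set (c := hz v).
  set (K := a*a+b*b+c*c).
  assert (HK : 0 <= K) by (unfold K; nra).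
  set (t := alpha*alpha / (alpha*alpha + K)).
  assert (Ht0 : 0 < t) by (unfold t; apply Rdiv_lt_0_compat; nra).
  assert (Et : t * (alpha*alpha+K) = alpha*alpha).
  { unfold t. field. apply Rgt_not_eq. nra. }
  assert (0 <= t*K) by (apply Rmult_le_pos; lra).
  assert (0 < alpha*alpha) by nra.
  assert (Ht1 : t <= 1) by nra.
  exists (/ t). split. apply Rinv_0_lt_compat; auto.
  rewrite Rinv_inv. unfold in_Balpha, dil. rewrite hx_pt, hy_pt, hz_pt.
  fold v a b c.
  assert (tK : t * K <= alpha * alpha).
  { nra. }
  assert (t*t*t*t*(c*c) <= t*t*(c*c)).
  { assert (0 <= t*t*(c*c)) by nra. assert (t*t <= 1) by nra. nra. }
  assert (t*t*K <= t * K) by nra.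
  unfold K in *. nra.
Qed.

Lemma d_is_inf alpha (Ha : 0 < alpha) p q : is_inf (dset alpha p q) (d_alpha alpha p q).
Proof.
  unfold d_alpha. apply epsilon_spec.
  destruct (dset_ne alpha Ha p q) as [r0 Hr0].
  destruct (completeness (fun x => dset alpha p q (- x))) as [m [Hm1 Hm2]].
  - exists 0. intros x Hx. destruct Hx. lra.
  - exists (- r0). rewrite Ropp_involutive. auto.
  - exists (- m). split.
    + intros r Hr. assert (- r <= m). { apply Hm1. rewrite Ropp_involutive; auto. } lra.
    + intros m' Hm'. assert (m <= - m'). { apply Hm2. intros x Hx. specialize (Hm' _ Hx). lra. } lra.
Qed.

Lemma d_le_of_sub alpha (Ha : 0 < alpha) p q p' q' :
  (forall r, dset alpha p' q' r -> dset alpha p q r) -> d_alpha alpha p q <= d_alpha alpha p' q'.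
Proof.
  intros Hs. destruct (d_is_inf alpha Ha p q) as [A _]. destruct (d_is_inf alpha Ha p' q') as [_ B].
  apply B. intros r Hr. apply A, Hs, Hr.
Qed.

Lemma axis_cmp alpha (Ha : 0 < alpha) u v :
  hx u = 0 -> hy u = 0 -> hx v = 0 -> hy v = 0 ->
  (hz v - hz u)^2 <= hz v ^ 2 -> d_alpha alpha u v <= rp alpha v.
Proof.
  intros h1 h2 h3 h4 hz'. unfold rp. apply d_le_of_sub; auto.
  intros r [Hr Hb]. split; auto. revert Hb. unfold in_Balpha, dil, hmul, hinv, horigin.
  rewrite !hx_pt, !hy_pt, !hz_pt, h1, h2, h3, h4.
  intro Hb. set (k := / r) in *. 
  assert (E1 : (k*k*(- hz u + hz v + / 2 * (- 0 * 0 - - 0 * 0)))^2 = (k*k)^2 * (hz v - hz u)^2) by ring.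
  assert (E2 : (k*k*(- 0 + hz v + / 2 * (- 0 * 0 - - 0 * 0)))^2 = (k*k)^2 * (hz v)^2) by ring.
  rewrite E1. rewrite E2 in Hb.
  assert (0 <= (k*k)^2) by nra. nra.
Qed.

Lemma nat_sector w (Hw : 0 < w) n phi : 0 <= phi < INR n * w ->
  exists k, (k < n)%nat /\ INR k * w <= phi < INR (S k) * w.
Proof.
  induction n as [|n IH]; intros [h1 h2].
  - simpl in h2. lra.
  - destruct (Rlt_or_le phi (INR n * w)) as [h|h].
    + destruct IH as [k [Hk Hk2]]. lra. exists k. split; auto; lia.
    + exists n. split. lia. lra.
Qed.

Lemma sq_eq a b : 0 <= a -> 0 <= b -> a * a = b * b -> a = b.
Proof.
  intros ha hb e. destruct (Rtotal_order a b) as [h|[h|h]]; auto; nra.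
Qed.

Lemma polar x y : ~ (x = 0 /\ y = 0) ->
  exists rho phi, 0 < rho /\ 0 <= phi < 2 * PI /\ x = rho * cos phi /\ y = rho * sin phi.
Proof.
  intros Hn.
  assert (Hp : 0 < x*x + y*y).
  { destruct (Req_dec x 0); destruct (Req_dec y 0); try tauto; nra. }
  set (rho := sqrt (x*x+y*y)).
  assert (Hr : 0 < rho) by (apply sqrt_lt_R0; auto).
  assert (Hr2 : rho * rho = x*x+y*y) by (apply sqrt_sqrt; lra).
  set (u := x / rho).
  assert (Hx : x = rho * u) by (unfold u; field; lra).
  assert (Hu : -1 <= u <= 1).
  { assert (u*u <= 1).
    { assert (rho*rho*(u*u) <= rho*rho*1) by nra.
      apply (Rmult_le_reg_l (rho*rho)); nra. }
    nra. }
  pose proof (cos_acos u Hu) as Hc.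
  pose proof (acos_bound u) as Hb.
  assert (Hs0 : 0 <= sin (acos u)) by (apply sin_ge_0; lra).
  assert (Hs2 : sin (acos u) * sin (acos u) = 1 - u*u).
  { pose proof (sin2_cos2 (acos u)). unfold Rsqr in *. rewrite Hc in *. lra. }
  assert (Hy2 : y * y = (rho * sin (acos u)) * (rho * sin (acos u))).
  { transitivity (rho*rho*(sin (acos u) * sin (acos u))). 2: ring.
    rewrite Hs2. nra. }
  pose proof PI_RGT_0.
  destruct (Rle_or_lt 0 y) as [hy|hy].
  - exists rho, (acos u). split; auto. split. lra. split. rewrite Hc; auto.
    apply sq_eq; auto. apply Rmult_le_pos; lra.
  - exists rho, (2*PI - acos u).
    assert (Hu' : -1 < u < 1).
    { assert (0 < y*y) by nra. assert (u*u < 1) by nra. nra. }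
    pose proof (acos_bound_lt u Hu').
    split; auto. split. lra.
    replace (2*PI - acos u) with (- acos u + 2 * INR 1 * PI) by (simpl; ring).
    rewrite cos_period, sin_period, cos_neg, sin_neg, Hc. split; auto.
    assert (0 < sin (acos u)) by (apply sin_gt_0; lra).
    enough (- y = rho * sin (acos u)) by lra.
    apply sq_eq; try lra. apply Rmult_le_pos; lra.
Qed.

Lemma rot_polar rho phi t p : hx p = rho * cos phi -> hy p = rho * sin phi ->
  hx (rot (cos t) (sin t) p) = rho * cos (phi + t) /\ hy (rot (cos t) (sin t) p) = rho * sin (phi + t).
Proof.
  intros h1 h2. unfold rot. rewrite hx_pt, hy_pt, h1, h2, cos_plus, sin_plus. split; ring.
Qed.

Lemma cone_of_angle theta rho psi p : 0 < theta < PI / 2 -> 0 < rho -> -theta < psi < theta ->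
  hx p = rho * cos psi -> hy p = rho * sin psi -> in_cone theta p.
Proof.
  intros Ht Hr Hp h1 h2. unfold in_cone. rewrite h1, h2.
  assert (Hc : 0 < cos psi) by (apply cos_gt_0; lra).
  assert (T1 : tan psi < tan theta) by (apply tan_increasing; lra).
  assert (T2 : tan (- theta) < tan psi) by (apply tan_increasing; lra).
  rewrite tan_neg in T2.
  assert (Es : sin psi = tan psi * cos psi) by (unfold tan; field; lra).
  rewrite Es. rewrite Rabs_mult, Rabs_mult, (Rabs_right rho), (Rabs_right (cos psi)) by lra.
  assert (Rabs (tan psi) < tan theta) by (apply Rabs_def1; lra).
  assert (0 < rho * cos psi) by nra.
  nra.
Qed.

Fixpoint pw {A} (Q : A -> A -> Prop) (l : list A) : Prop :=
  match l with
  | [] => True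
  | a :: l' => (forall b, In b l' -> Q a b /\ Q b a) /\ pw Q l'
  end.

Lemma pw_of_idx {A} (Q : A -> A -> Prop) d l :
  (forall i j, (i < length l)%nat -> (j < length l)%nat -> i <> j -> Q (nth i l d) (nth j l d)) ->
  pw Q l.
Proof.
  induction l as [|a l IH]; simpl; intros Hq; auto. split.
  - intros b Hb. destruct (In_nth l b d Hb) as [j [Hj Hn]]. subst b.
    split; [apply (Hq 0%nat (S j)) | apply (Hq (S j) 0%nat)]; simpl; lia.
  - apply IH. intros i j Hi Hj Hij. apply (Hq (S i) (S j)); lia.
Qed.

Lemma idx_of_pw {A} (Q : A -> A -> Prop) d l : pw Q l ->
  forall i j, (i < length l)%nat -> (j < length l)%nat -> i <> j -> Q (nth i l d) (nth j l d).
Proof.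
  induction l as [|a l IH]; simpl; intros Hp i j Hi Hj Hij; [lia|].
  destruct Hp as [H1 H2].
  destruct i as [|i], j as [|j]; try lia.
  - apply H1. apply nth_In. lia.
  - apply H1. apply nth_In. lia.
  - apply IH; auto; lia.
Qed.

Lemma pw_map {A B} (Q : A -> A -> Prop) (Q' : B -> B -> Prop) (f : A -> B) l :
  (forall a b, In a l -> In b l -> Q a b -> Q' (f a) (f b)) -> pw Q l -> pw Q' (map f l).
Proof.
  induction l as [|a l IH]; simpl; intros Hf Hp; auto. destruct Hp as [H1 H2]. split.
  - intros b' Hb'. apply in_map_iff in Hb'. destruct Hb' as [b [<- Hb]].
    destruct (H1 b Hb). split; apply Hf; auto.
  - apply IH; auto.
Qed.

Lemma pw_filter {A} (Q : A -> A -> Prop) f l : pw Q l -> pw Q (filter f l).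
Proof.
  induction l as [|a l IH]; simpl; intros Hp; auto. destruct Hp as [H1 H2].
  destruct (f a); simpl; auto. split; auto.
  intros b Hb. apply filter_In in Hb. apply H1. tauto.
Qed.

Lemma pw_len1 {A} (Q : A -> A -> Prop) l : pw Q l ->
  (forall u v, In u l -> In v l -> ~ Q u v \/ ~ Q v u) -> (length l <= 1)%nat.
Proof.
  destruct l as [|a [|b l]]; simpl; intros Hp Hn; try lia.
  destruct Hp as [H1 _]. destruct (H1 b) as [q1 q2]; simpl; auto.
  destruct (Hn a b); simpl; auto; tauto.
Qed.

Lemma filter_len {A} (f : A -> bool) l :
  (length (filter f l) + length (filter (fun x => negb (f x)) l))%nat = length l.
Proof.
  induction l as [|a l IH]; simpl; auto. destruct (f a); simpl; lia.
Qed.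

Fixpoint sumN (M : nat) (g : nat -> nat) : nat :=
  match M with O => O | S n => (sumN n g + g n)%nat end.

Lemma sumN_add M g h : sumN M (fun k => g k + h k)%nat = (sumN M g + sumN M h)%nat.
Proof. induction M; simpl; lia. Qed.

Lemma sumN_ind1 M c : (c < M)%nat -> sumN M (fun k => if Nat.eqb c k then 1 else 0)%nat = 1%nat.
Proof.
  induction M; intros Hc; simpl; [lia|].
  destruct (Nat.eqb_spec c M).
  - subst. assert (sumN M (fun k => if Nat.eqb M k then 1 else 0)%nat = 0%nat).
    { clear. assert (forall n, (n <= M)%nat -> sumN n (fun k => if Nat.eqb M k then 1 else 0)%nat = 0%nat).
      { induction n; intros; simpl; auto. destruct (Nat.eqb_spec M n); [lia|]. rewrite IHn; lia. }
      apply H; lia. }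
    lia.
  - rewrite IHM; lia.
Qed.

Lemma sumN_ext M g h : (forall k, g k = h k) -> sumN M g = sumN M h.
Proof. intros E; induction M; simpl; congruence. Qed.

Lemma sumN_filter {A} (cls : A -> nat) M l : (forall a, In a l -> (cls a < M)%nat) ->
  sumN M (fun k => length (filter (fun a => Nat.eqb (cls a) k) l)) = length l.
Proof.
  induction l as [|a l IH]; intros Hl; simpl.
  - clear. induction M; simpl; lia.
  - transitivity (sumN M (fun k => (if Nat.eqb (cls a) k then 1 else 0) +
         length (filter (fun a => Nat.eqb (cls a) k) l))%nat).
    { apply sumN_ext; intros k. destruct (Nat.eqb (cls a) k); reflexivity. }
    rewrite sumN_add, sumN_ind1, IH. lia. intros; apply Hl; simpl; auto. apply Hl; simpl; auto.
Qed.

Lemma sumN_bound M g L : (forall k, (k < M)%nat -> (g k < L)%nat) -> (0 < M)%nat ->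
  (sumN M g < M * L)%nat.
Proof.
  intros Hg HM. induction M; simpl; [lia|].
  destruct M. simpl. specialize (Hg 0%nat). lia.
  assert (sumN (S M) g < S M * L)%nat by (apply IHM; auto; lia).
  specialize (Hg (S M)). lia.
Qed.

Lemma pigeon {A} (cls : A -> nat) M l : (0 < M)%nat -> (forall a, In a l -> (cls a < M)%nat) ->
  exists k, (k < M)%nat /\ (length l <= M * length (filter (fun a => Nat.eqb (cls a) k) l))%nat.
Proof.
  intros HM Hl.
  destruct (Classical_Prop.classic (exists k, (k < M)%nat /\ (length l <= M * length (filter (fun a => Nat.eqb (cls a) k) l))%nat)) as [h|h]; auto.
  exfalso.
  assert (Hb : (sumN M (fun k => M * length (filter (fun a => Nat.eqb (cls a) k) l)) < M * length l)%nat).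
  { apply sumN_bound; auto. intros k Hk. destruct (Nat.le_gt_cases (length l)
      (M * length (filter (fun a => Nat.eqb (cls a) k) l))); auto. exfalso; eauto. }
  assert (E : forall n, (sumN n (fun k => M * length (filter (fun a => Nat.eqb (cls a) k) l)) =
     M * sumN n (fun k => length (filter (fun a => Nat.eqb (cls a) k) l)))%nat).
  { induction n; simpl; lia. }
  rewrite E, sumN_filter in Hb; auto. lia.
Qed.

Definition bP (P : Prop) : bool := if excluded_middle_informative P then true else false.
Lemma bP_true P : bP P = true <-> P.
Proof. unfold bP; destruct (excluded_middle_informative P); split; intros; auto; discriminate. Qed.
Lemma bP_false P : negb (bP P) = true <-> ~ P.
Proof. unfold bP; destruct (excluded_middle_informative P); simpl; split; intros; auto; try discriminate; tauto. Qed.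

Definition tang (w : R) (j : nat) : R := - (INR j * w + w / 2).
Definition Tk (m : nat) (w : R) (k : nat) (c : H) : H :=
  if Nat.ltb k m then rot (cos (tang w k)) (sin (tang w k)) c
  else rot (cos (tang w (k - m))) (sin (tang w (k - m))) (refl c).

Lemma Tk_iso alpha m w k u v : d_alpha alpha (Tk m w k u) (Tk m w k v) = d_alpha alpha u v.
Proof. unfold Tk. destruct (Nat.ltb k m); rewrite d_rot; [|rewrite d_refl]; reflexivity. Qed.

Lemma Tk_0 m w k : Tk m w k horigin = horigin.
Proof.
  unfold Tk. destruct (Nat.ltb k m); apply pt_eq; unfold rot, refl, horigin; rewrite ?hx_pt, ?hy_pt, ?hz_pt; ring.
Qed.

Lemma Tk_rp alpha m w k v : rp alpha (Tk m w k v) = rp alpha v.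
Proof. unfold rp. rewrite <- (Tk_0 m w k) at 1. apply Tk_iso. Qed.

Lemma sector_cone theta m w c : 0 < theta < PI / 2 -> (0 < m)%nat -> w = 2 * PI / INR m ->
  w / 2 < theta -> ~ (hx c = 0 /\ hy c = 0) ->
  exists j, (j < m)%nat /\ in_cone theta (rot (cos (tang w j)) (sin (tang w j)) c).
Proof.
  intros Ht Hm Hw Hw2 Hc.
  destruct (polar (hx c) (hy c) Hc) as [rho [phi [Hr [Hphi [E1 E2]]]]].
  assert (Hm' : 0 < INR m) by (apply lt_0_INR; auto).
  assert (Hwp : 0 < w) by (rewrite Hw; apply Rdiv_lt_0_compat; [pose proof PI_RGT_0|]; lra).
  assert (HmW : INR m * w = 2 * PI) by (rewrite Hw; field; lra).
  destruct (nat_sector w Hwp m phi) as [j [Hj [Hj1 Hj2]]]. lra.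
  exists j. split; auto.
  destruct (rot_polar rho phi (tang w j) c E1 E2) as [F1 F2].
  apply (cone_of_angle theta rho (phi + tang w j)); auto.
  unfold tang. rewrite S_INR in Hj2. lra.
Qed.

Lemma class_exists theta m w c : 0 < theta < PI / 2 -> (0 < m)%nat -> w = 2 * PI / INR m ->
  w / 2 < theta -> ~ (hx c = 0 /\ hy c = 0) ->
  exists k, (k < 2 * m)%nat /\ hz (Tk m w k c) <= 0 /\ in_cone theta (Tk m w k c).
Proof.
  intros Ht Hm Hw Hw2 Hc.
  destruct (Rle_or_lt (hz c) 0) as [hz0|hz0].
  - destruct (sector_cone theta m w c) as [j [Hj Hcone]]; auto.
    exists j. unfold Tk. assert (E : Nat.ltb j m = true) by (apply Nat.ltb_lt; auto).
    rewrite E. split. lia. split; [unfold rot; rewrite hz_pt; auto | auto].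
  - destruct (sector_cone theta m w (refl c)) as [j [Hj Hcone]]; auto.
    { unfold refl; rewrite hx_pt, hy_pt. intros [a b]. apply Hc; split; lra. }
    exists (j + m)%nat. unfold Tk. assert (E : Nat.ltb (j + m) m = false) by (apply Nat.ltb_ge; lia).
    rewrite E. replace (j + m - m)%nat with j by lia.
    split. lia. split; auto. unfold rot, refl; rewrite !hz_pt; lra.
Qed.

Lemma sq_helper a b : (0 <= a <= b \/ b <= a <= 0) -> (b - a)^2 <= b^2.
Proof.
  intros [h|h].
  - assert (0 <= a * (2*b - a)) by (apply Rmult_le_pos; lra). nra.
  - assert (0 <= (-a) * (a - 2*b)) by (apply Rmult_le_pos; lra). nra.
Qed.

Theorem lemma3p1 (alpha : R) (Halpha : 0 < alpha)
  (Hdist : is_distance (d_alpha alpha))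
  (theta : R) (Htheta : 0 < theta < PI / 2)
  (Bfam : list (H * R)) (HB : besicovitch alpha Bfam) :
  exists ps : list H,
    besicovitch alpha (map (fun p => (p, rp alpha p)) ps) /\
    (forall p, In p ps -> hz p <= 0 /\ in_cone theta p) /\
    INR (length Bfam) <= 2 * (PI / theta + 1) * INR (length ps) + 2.
Proof.
  destruct HB as [HBi [q Hq]].
  set (Q' := fun u v => rp alpha v < d_alpha alpha u v).
  set (Qb := fun a b : H * R => ~ in_ball alpha (fst b) (snd b) (fst a)).
  assert (pwB : pw Qb Bfam) by (apply (pw_of_idx Qb (horigin, 0)); exact HBi).
  set (tr := fun b : H * R => hmul (hinv q) (fst b)).
  set (C := map tr Bfam).
  assert (pwC : pw Q' C).
  { apply (pw_map Qb); auto. intros a b Ha Hb Hab. unfold Q', Qb, tr, in_ball in *.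
    rewrite d_transl. unfold rp.
    replace horigin with (hmul (hinv q) q)
      by (apply pt_eq; unfold hmul, hinv, horigin; rewrite ?hx_pt, ?hy_pt, ?hz_pt; ring).
    rewrite d_transl. specialize (Hq b Hb). simpl in Hq. lra. }
  set (axb := fun c : H => bP (hx c = 0 /\ hy c = 0)).
  set (AX := filter axb C).
  set (NA := filter (fun c => negb (axb c)) C).
  assert (HAX : (length AX <= 2)%nat).
  { set (zb := fun c : H => bP (0 <= hz c)).
    rewrite <- (filter_len zb AX).
    assert (Hax : forall c, In c AX -> hx c = 0 /\ hy c = 0).
    { intros c Hc. unfold AX in Hc. apply filter_In in Hc. apply bP_true. apply Hc. }
    assert (L1 : (length (filter zb AX) <= 1)%nat).
    { apply (pw_len1 Q'). apply pw_filter, pw_filter, pwC.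
      intros u v Hu Hv. apply filter_In in Hu, Hv.
      destruct Hu as [Hu Hu'], Hv as [Hv Hv']. unfold zb in Hu', Hv'. apply (proj1 (bP_true _)) in Hu'. apply (proj1 (bP_true _)) in Hv'.
      destruct (Hax u Hu), (Hax v Hv).
      destruct (Rle_or_lt (hz u) (hz v)).
      - left. unfold Q'. assert (d_alpha alpha u v <= rp alpha v) by (apply axis_cmp; auto; apply sq_helper; left; lra). intro; lra.
      - right. unfold Q'. assert (d_alpha alpha v u <= rp alpha u) by (apply axis_cmp; auto; apply sq_helper; left; lra). intro; lra. }
    assert (L2 : (length (filter (fun x => negb (zb x)) AX) <= 1)%nat).
    { apply (pw_len1 Q'). apply pw_filter, pw_filter, pwC.
      intros u v Hu Hv. apply filter_In in Hu, Hv.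
      destruct Hu as [Hu Hu'], Hv as [Hv Hv']. unfold zb in Hu', Hv'. apply (proj1 (bP_false _)) in Hu'. apply (proj1 (bP_false _)) in Hv'.
      destruct (Hax u Hu), (Hax v Hv).
      destruct (Rle_or_lt (hz u) (hz v)).
      - right. unfold Q'. assert (d_alpha alpha v u <= rp alpha u) by (apply axis_cmp; auto; apply sq_helper; right; lra). intro; lra.
      - left. unfold Q'. assert (d_alpha alpha u v <= rp alpha v) by (apply axis_cmp; auto; apply sq_helper; right; lra). intro; lra. }
    lia. }
  pose proof PI_RGT_0 as Hpi.
  destruct (INR_unbounded (PI / theta)) as [n0 Hn0].
  destruct (nat_sector 1 Rlt_0_1 n0 (PI / theta)) as [k0 [_ [Hk1 Hk2]]].
  { split. apply Rlt_le, Rdiv_lt_0_compat; lra. lra. }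
  set (m := S k0). set (w := 2 * PI / INR m).
  assert (Hm : (0 < m)%nat) by (unfold m; lia).
  assert (Hm' : 0 < INR m) by (apply lt_0_INR; auto).
  assert (Hmb : INR m <= PI / theta + 1) by (unfold m; rewrite S_INR; lra).
  assert (Hmt : PI < INR m * theta).
  { assert (PI / theta < INR m) by (unfold m; lra).
    apply (Rmult_lt_compat_r theta) in H; [|lra]. unfold Rdiv in H.
    rewrite Rmult_assoc, Rinv_l, Rmult_1_r in H; lra. }
  assert (Hw2 : w / 2 < theta).
  { unfold w. replace (2 * PI / INR m / 2) with (PI / INR m) by (field; lra).
    apply (Rmult_lt_reg_r (INR m)); auto. unfold Rdiv. rewrite Rmult_assoc, Rinv_l; lra. }
  set (Pk := fun k c => (k < 2 * m)%nat /\ hz (Tk m w k c) <= 0 /\ in_cone theta (Tk m w k c)).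
  set (cls := fun c => epsilon (inhabits 0%nat) (fun k => Pk k c)).
  assert (Hcls : forall c, In c NA -> Pk (cls c) c).
  { intros c Hc. unfold cls. apply epsilon_spec.
    apply class_exists; auto. unfold NA in Hc. apply filter_In in Hc.
    apply bP_false, Hc. }
  destruct (pigeon cls (2 * m) NA) as [k [Hk Hpig]]. lia.
  { intros a Ha. apply Hcls, Ha. }
  set (F := filter (fun a => Nat.eqb (cls a) k) NA).
  exists (map (Tk m w k) F).
  assert (pwP : pw Q' (map (Tk m w k) F)).
  { apply (pw_map Q'). intros a b _ _. unfold Q'. rewrite Tk_iso, Tk_rp. auto.
    apply pw_filter, pw_filter, pwC. }
  split; [|split].
  - split.
    + intros i j Hi Hj Hij. rewrite length_map in Hi, Hj.
      set (f := fun p => (p, rp alpha p)).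
      rewrite (nth_indep _ (horigin, 0) (f horigin)) by (rewrite length_map; auto).
      rewrite (nth_indep _ (horigin, 0) (f horigin) (n := i)) by (rewrite length_map; auto).
      rewrite !map_nth. unfold f; simpl.
      pose proof (idx_of_pw Q' horigin _ pwP i j Hi Hj Hij) as HQ. unfold Q', in_ball in *. lra.
    + exists horigin. intros b Hb. apply in_map_iff in Hb. destruct Hb as [p [<- _]].
      unfold in_ball, rp; simpl. lra.
  - intros p Hp. apply in_map_iff in Hp. destruct Hp as [c [<- Hc]].
    unfold F in Hc. apply filter_In in Hc. destruct Hc as [Hc Hck].
    apply Nat.eqb_eq in Hck. destruct (Hcls c Hc) as [_ [A1 A2]]. rewrite Hck in A1, A2. auto.
  - rewrite length_map.
    assert (HL : length Bfam = (length AX + length NA)%nat).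
    { unfold AX, NA. rewrite filter_len. unfold C. rewrite length_map. auto. }
    rewrite HL. fold F in Hpig.
    apply le_INR in Hpig. apply le_INR in HAX.
    rewrite plus_INR. rewrite mult_INR, mult_INR in Hpig.
    assert (0 <= INR (length F)) by apply pos_INR.
    replace (INR 2) with 2 in * by reflexivity.
    nra.
Qed.
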